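(* Fix $m\ge 2$, $y\in\{1,\dots,m\}$, $1\le k\le m-1$. Let $L^*_k:\mathbb{R}^m\to\mathbb{R}\cup\{+\infty\}$ be $$L^*_k(v)=\begin{cases}\sum_{j\ne y}v_j\log v_j+(1+v_y)\log(1+v_y), & \text{if }\langle\mathbf{1},v\rangle=0\text{ and }v_{\setminus y}\in\Delta^\alpha_k(1),\\ +\infty,&\text{otherwise,}\end{cases}$$ and let the top-$k$ entropy loss be its convex conjugate $L_k(u)=\sup_{v\in\mathbb{R}^m}\{\langle u,v\rangle-L^*_k(v)\}$. Then for every $u\in\mathbb{R}^m$ with $u_y=0$, $$L_k(u)=\max\Big\{\langle u_{\setminus y},x\rangle-(1-s)\log(1-s)-\langle x,\log x\rangle\ :\ x\in\Delta^\alpha_k(1),\ \langle\mathbf{1},x\rangle=s\Big\},$$ and for $k=1$ this equals the softmax loss: $L_1(u)=\log\big(1+\sum_{j\ne y}e^{u_j}\big)=\log\sum_{j}\exp(u_j-u_y)$.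
   Context: $v_{\setminus y}\in\mathbb{R}^{m-1}$ is $v$ with its $y$-th coordinate deleted; $\mathbf{1}$ is the all-ones vector; $\langle x,\log x\rangle=\sum_j x_j\log x_j$ with $0\log0=0$. The top-$k$ simplex ($\alpha$ version) of radius $r$ in $\mathbb{R}^{m-1}$ is $\Delta^\alpha_k(r)=\{x:\ \langle\mathbf{1},x\rangle\le r,\ 0\le x_i\le\tfrac1k\langle\mathbf{1},x\rangle\ \forall i\}$. In the intended application $u_j=f_j(x)-f_y(x)$, so $u_y=0$. *)

(* Defs.v *)
From Stdlib Require Import Reals Lra Lia ClassicalEpsilon.
Open Scope R_scope.

(* Vectors in R^n are functions nat -> R; only indices 0..n-1 are relevant.
   Coordinates are 0-based: the paper's y in {1..m} is y < m here. *)

Fixpoint sumR (n : nat) (f : nat -> R) : R :=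
  match n with
  | O => 0
  | S n' => sumR n' f + f n'
  end.

Definition ones_dot (n : nat) (x : nat -> R) : R := sumR n x.

Definition dot (n : nat) (u v : nat -> R) : R := sumR n (fun j => u j * v j).

(* t log t with the convention 0 log 0 = 0 *)
Definition xlnx (t : R) : R := if Rle_dec t 0 then 0 else t * ln t.

Definition ent (n : nat) (x : nat -> R) : R := sumR n (fun j => xlnx (x j)).

Definition del (y : nat) (v : nat -> R) : nat -> R :=
  fun i => if Nat.ltb i y then v i else v (S i).

Definition topk_simplex (n k : nat) (r : R) (x : nat -> R) : Prop :=
  ones_dot n x <= r /\
  forall i, (i < n)%nat -> 0 <= x i /\ x i <= / INR k * ones_dot n x.

Definition Lstar_dom (m y k : nat) (v : nat -> R) : Prop :=
  ones_dot m v = 0 /\ topk_simplex (m - 1) k 1 (del y v).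

Definition Lstar_val (m y : nat) (v : nat -> R) : R :=
  ent (m - 1) (del y v) + xlnx (1 + v y).

(* L*_k : R^m -> R u {+oo}, with None standing for +oo *)
Definition Lstar (m y k : nat) (v : nat -> R) : option R :=
  if excluded_middle_informative (Lstar_dom m y k v)
  then Some (Lstar_val m y v) else None.

(* The set { <u,v> - L*_k(v) : v in R^m, L*_k(v) < +oo }; values v with
   L*_k(v) = +oo contribute -oo to the supremum and are therefore omitted. *)
Definition conj_set (m y k : nat) (u : nat -> R) (t : R) : Prop :=
  exists v r, Lstar m y k v = Some r /\ t = dot m u v - r.

Definition Lk_eq (m y k : nat) (u : nat -> R) (c : R) : Prop :=
  is_lub (conj_set m y k u) c.

Definition topk_obj (m y : nat) (u x : nat -> R) : R :=
  dot (m - 1) (del y u) x - xlnx (1 - ones_dot (m - 1) x) - ent (m - 1) x.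

Definition is_max_topk (m y k : nat) (u : nat -> R) (c : R) : Prop :=
  (exists x, topk_simplex (m - 1) k 1 x /\ topk_obj m y u x = c) /\
  (forall x, topk_simplex (m - 1) k 1 x -> topk_obj m y u x <= c).

(* Main.v *)
Require Import Defs.
From Stdlib Require Import Reals Lra Lia Rtopology FunctionalExtensionality ClassicalEpsilon Classical.
Open Scope R_scope.

Lemma sumR_ext n f g : (forall i, (i < n)%nat -> f i = g i) -> sumR n f = sumR n g.
Proof. induction n; simpl; intros H; auto. rewrite IHn; [rewrite H|]; auto; intros; apply H; lia. Qed.

Lemma sumR_le n f g : (forall i, (i < n)%nat -> f i <= g i) -> sumR n f <= sumR n g.
Proof. induction n; simpl; intros H; [lra|]. assert (f n <= g n) by (apply H; lia).
 assert (sumR n f <= sumR n g) by (apply IHn; intros; apply H; lia). lra. Qed.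

Lemma sumR_plus n f g : sumR n (fun j => f j + g j) = sumR n f + sumR n g.
Proof. induction n; simpl; [lra|]. rewrite IHn; lra. Qed.

Lemma sumR_scal n c f : sumR n (fun j => c * f j) = c * sumR n f.
Proof. induction n; simpl; [lra|]. rewrite IHn; lra. Qed.

Lemma sumR_const n c : sumR n (fun _ => c) = INR n * c.
Proof. induction n; simpl sumR; [simpl; lra|]. rewrite IHn, S_INR; lra. Qed.

Lemma sumR_split n f y : (y <= n)%nat -> sumR (S n) f = sumR n (del y f) + f y.
Proof.
  revert y; induction n; intros y Hy.
  - assert (y = 0%nat) by lia; subst; simpl; lra.
  - destruct (Nat.eq_dec y (S n)) as [->|Hne].
    + change (sumR (S (S n)) f) with (sumR (S n) f + f (S n)).
      f_equal. apply sumR_ext. intros i Hi. unfold del.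
      destruct (Nat.ltb_spec i (S n)); auto; lia.
    + change (sumR (S (S n)) f) with (sumR (S n) f + f (S n)).
      rewrite (IHn y) by lia. simpl sumR.
      replace (del y f n) with (f (S n)); [lra|].
      unfold del. destruct (Nat.ltb_spec n y); [lia|]. reflexivity.
Qed.

Lemma sumR_split' m f y : (y < m)%nat -> sumR m f = sumR (m - 1) (del y f) + f y.
Proof. intros H. destruct m; [lia|]. replace (S m - 1)%nat with m by lia. apply sumR_split; lia. Qed.

Lemma dot_split m y u v : (y < m)%nat ->
  dot m u v = dot (m - 1) (del y u) (del y v) + u y * v y.
Proof.
  intros H. unfold dot. rewrite (sumR_split' m _ y H). f_equal.
  apply sumR_ext. intros i _. unfold del. destruct (Nat.ltb i y); auto.
Qed.

Lemma conj_iff m y k u t : (y < m)%nat -> u y = 0 ->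
  conj_set m y k u t <-> exists x, topk_simplex (m - 1) k 1 x /\ t = topk_obj m y u x.
Proof.
  intros Hy Hu. split.
  - intros [v [r [Hr Ht]]]. unfold Lstar in Hr.
    destruct (excluded_middle_informative (Lstar_dom m y k v)) as [[Hd1 Hd2]|]; [|discriminate].
    injection Hr as <-. exists (del y v). split; auto.
    rewrite Ht. unfold topk_obj, Lstar_val. rewrite dot_split with (y:=y) by auto.
    unfold ones_dot in Hd1. rewrite (sumR_split' m _ y Hy) in Hd1.
    unfold ones_dot. replace (1 + v y) with (1 - sumR (m - 1) (del y v)) by lra.
    rewrite Hu. lra.
  - intros [x [Hx Ht]].
    set (v := fun j => if Nat.ltb j y then x j else if Nat.eqb j y then - ones_dot (m-1) x else x (j - 1)%nat).
    assert (Hdv : del y v = x).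
    { apply functional_extensionality. intros i. unfold del, v.
      destruct (Nat.ltb_spec i y); auto.
      destruct (Nat.ltb_spec (S i) y); [lia|]. destruct (Nat.eqb_spec (S i) y); [lia|].
      f_equal; lia. }
    assert (Hvy : v y = - ones_dot (m-1) x).
    { unfold v. rewrite Nat.ltb_irrefl, Nat.eqb_refl. auto. }
    assert (Hdom : Lstar_dom m y k v).
    { split. unfold ones_dot. rewrite (sumR_split' m _ y Hy). fold (ones_dot (m-1) (del y v)).
      rewrite Hdv, Hvy. lra. rewrite Hdv; auto. }
    exists v, (Lstar_val m y v). split.
    + unfold Lstar. destruct (excluded_middle_informative (Lstar_dom m y k v)); [reflexivity|contradiction].
    + rewrite Ht. unfold topk_obj, Lstar_val. rewrite (dot_split m y u v Hy).
      rewrite Hdv, Hvy, Hu. replace (1 + - ones_dot (m - 1) x) with (1 - ones_dot (m - 1) x) by lra. lra.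
Qed.

Lemma max_lub m y k u c : (y < m)%nat -> u y = 0 ->
  is_max_topk m y k u c -> Lk_eq m y k u c.
Proof.
  intros Hy Hu [[x [Hx Hc]] Hub]. split.
  - intros t Ht. apply (conj_iff m y k u t Hy Hu) in Ht. destruct Ht as [x' [Hx' ->]]. auto.
  - intros b Hb. apply Hb. apply (conj_iff m y k u c Hy Hu). eauto.
Qed.

Lemma ln_le_m1 z : 0 < z -> ln z <= z - 1.
Proof. intros Hz. pose proof (exp_ineq1_le (ln z)). rewrite exp_ln in H; lra. Qed.

Lemma xlnx_pos t : 0 < t -> xlnx t = t * ln t.
Proof. intros H. unfold xlnx. destruct (Rle_dec t 0); lra. Qed.

Lemma gibbs_pt w x Z : 0 <= x -> 0 < Z -> w * x - xlnx x <= exp w / Z - x + x * ln Z.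
Proof.
  intros Hx HZ. destruct (Req_dec x 0) as [->|Hne].
  - unfold xlnx. destruct (Rle_dec 0 0); [|lra]. pose proof (exp_pos w).
    assert (0 < exp w / Z) by (apply Rdiv_lt_0_compat; auto). lra.
  - assert (Hp : 0 < x) by lra. rewrite xlnx_pos by auto.
    set (z := exp w / (Z * x)).
    assert (Hz : 0 < z) by (unfold z; apply Rdiv_lt_0_compat; [apply exp_pos|nra]).
    assert (Hlz : ln z = w - ln Z - ln x).
    { unfold z, Rdiv. rewrite ln_mult, ln_Rinv, ln_mult, ln_exp; try nra; try apply exp_pos.
      apply Rinv_0_lt_compat; nra. }
    pose proof (ln_le_m1 z Hz).
    assert (x * z = exp w / Z) by (unfold z; field; lra).
    assert (x * ln z <= x * (z - 1)) by (apply Rmult_le_compat_l; lra).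
    rewrite Hlz in H1. nra.
Qed.

Lemma sumR_minus n f g : sumR n (fun j => f j - g j) = sumR n f - sumR n g.
Proof. induction n; simpl; [lra|]. rewrite IHn; lra. Qed.

Lemma sumR_nonneg n f : (forall i, (i < n)%nat -> 0 <= f i) -> 0 <= sumR n f.
Proof. intros H. rewrite <- (Rmult_0_r (INR n)), <- sumR_const. apply sumR_le. auto. Qed.

Lemma sumR_ge_term n f i : (forall j, (j < n)%nat -> 0 <= f j) -> (i < n)%nat -> f i <= sumR n f.
Proof.
  induction n; intros H Hi; [lia|]. simpl.
  assert (0 <= sumR n f) by (apply sumR_nonneg; intros; apply H; lia).
  destruct (Nat.eq_dec i n) as [->|]. lra.
  assert (0 <= f n) by (apply H; lia). assert (f i <= sumR n f) by (apply IHn; [intros; apply H|]; lia). lra.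
Qed.

Lemma simplex_bounds n k x : (1 <= k)%nat -> topk_simplex n k 1 x ->
  0 <= ones_dot n x <= 1 /\ forall i, (i < n)%nat -> 0 <= x i <= 1.
Proof.
  intros Hk [Hs Hi].
  assert (H0 : 0 <= ones_dot n x) by (apply sumR_nonneg; intros; apply Hi; auto).
  split; [lra|]. intros i Hin. destruct (Hi i Hin) as [Ha Hb]. split; auto.
  assert (1 <= INR k) by (apply (le_INR 1); auto).
  assert (0 < / INR k <= 1). { split. apply Rinv_0_lt_compat; lra. rewrite <- Rinv_1. apply Rinv_le_contravar; lra. }
  nra.
Qed.

Lemma obj_sum m y u x : topk_obj m y u x =
  sumR (m - 1) (fun j => del y u j * x j - xlnx (x j)) - xlnx (1 - ones_dot (m - 1) x).
Proof. unfold topk_obj, dot, ent. rewrite sumR_minus. lra. Qed.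

Section K1.
Variables (m y : nat) (u : nat -> R).
Let n := (m - 1)%nat.
Let Z := 1 + sumR n (fun j => exp (del y u j)).
Lemma Zpos : 0 < Z.
Proof. unfold Z. assert (0 <= sumR n (fun j => exp (del y u j))) by (apply sumR_nonneg; intros; left; apply exp_pos). lra. Qed.

Lemma k1_upper k x : (1 <= k)%nat -> topk_simplex n k 1 x -> topk_obj m y u x <= ln Z.
Proof.
  intros Hk Hx. destruct (simplex_bounds n k x Hk Hx) as [[Hs0 Hs1] Hxi].
  pose proof Zpos as HZ. rewrite obj_sum. fold n.
  assert (H1 : sumR n (fun j => del y u j * x j - xlnx (x j)) <=
      sumR n (fun j => exp (del y u j) / Z - x j + x j * ln Z)).
  { apply sumR_le. intros i Hi. apply gibbs_pt; auto. apply Hxi; auto. }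
  assert (E : sumR n (fun j => exp (del y u j) / Z - x j + x j * ln Z) =
     / Z * sumR n (fun j => exp (del y u j)) - ones_dot n x + ln Z * ones_dot n x).
  { rewrite <- sumR_scal. unfold ones_dot. rewrite <- sumR_scal, <- sumR_minus, <- sumR_plus.
    apply sumR_ext; intros; unfold Rdiv; ring. }
  rewrite E in H1.
  pose proof (gibbs_pt 0 (1 - ones_dot n x) Z ltac:(lra) HZ). rewrite exp_0 in H.
  assert (sumR n (fun j => exp (del y u j)) = Z - 1) by (unfold Z; lra).
  rewrite H0 in H1.
  assert (/ Z * (Z - 1) + 1 / Z = 1) by (field; lra). nra.
Qed.

Definition xstar j := exp (del y u j) / Z.

Lemma k1_attain : topk_simplex n 1 1 xstar /\ topk_obj m y u xstar = ln Z.
Proof.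
  pose proof Zpos as HZ.
  assert (Hs : ones_dot n xstar = (Z - 1) / Z).
  { unfold ones_dot, xstar, Rdiv. rewrite (sumR_ext n _ (fun j => / Z * exp (del y u j))) by (intros; lra).
    rewrite sumR_scal. unfold Z at 2. field. lra. }
  assert (Hpos : forall j, 0 < xstar j) by (intros; unfold xstar; apply Rdiv_lt_0_compat; auto; apply exp_pos).
  split.
  - split. rewrite Hs. apply (Rmult_le_reg_r Z); auto. unfold Rdiv. rewrite Rmult_assoc, Rinv_l; lra.
    intros i Hi. split. left; auto. simpl INR. rewrite Rinv_1, Rmult_1_l.
    apply sumR_ge_term; auto. intros; left; auto.
  - rewrite obj_sum. fold n. rewrite Hs.
    replace (1 - (Z - 1) / Z) with (/ Z) by (field; lra).
    rewrite xlnx_pos by (apply Rinv_0_lt_compat; auto). rewrite ln_Rinv by auto.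
    rewrite (sumR_ext n _ (fun j => ln Z * xstar j)).
    + rewrite sumR_scal. fold (ones_dot n xstar). rewrite Hs. field. lra.
    + intros i Hi. rewrite xlnx_pos by auto. unfold xstar at 3. unfold Rdiv.
      rewrite ln_mult, ln_Rinv, ln_exp; auto. ring. apply exp_pos. apply Rinv_0_lt_compat; auto.
Qed.
End K1.
Lemma xlnx_small eps : 0 < eps -> exists d, 0 < d /\ forall t, Rabs t < d -> Rabs (xlnx t) < eps.
Proof.
  intros He. exists (Rmin 1 (eps * eps / 4)). split.
  { apply Rmin_pos; nra. }
  intros t Ht. assert (Ht1 : Rabs t < 1) by (pose proof (Rmin_l 1 (eps*eps/4)); lra).
  assert (Ht2 : Rabs t < eps * eps / 4) by (pose proof (Rmin_r 1 (eps*eps/4)); lra).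
  unfold xlnx. destruct (Rle_dec t 0). rewrite Rabs_R0; auto.
  assert (Hp : 0 < t) by lra. rewrite Rabs_right in Ht1, Ht2 by lra.
  set (s := sqrt t). assert (Hs : 0 < s) by (apply sqrt_lt_R0; auto).
  assert (Hss : s * s = t) by (apply sqrt_sqrt; lra).
  assert (Hl : ln t = 2 * ln s) by (rewrite <- Hss, ln_mult; lra).
  pose proof (ln_le_m1 (/ s) ltac:(apply Rinv_0_lt_compat; auto)) as H1.
  rewrite ln_Rinv in H1 by auto.
  assert (ln t < 0) by (pose proof (ln_le_m1 t Hp); lra).
  assert (s * ln s >= 1 * s - 1) by (assert (s * (/ s) = 1) by (field; lra); nra).
  rewrite Rabs_left by nra.
  assert (s < eps / 2) by nra.
  rewrite Hl, <- Hss. nra.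
Qed.

Lemma cv_eventually (a b : nat -> R) l N : (forall p, (N <= p)%nat -> a p = b p) -> Un_cv a l -> Un_cv b l.
Proof.
  intros H Ha eps He. destruct (Ha eps He) as [N1 HN1]. exists (max N N1). intros p Hp.
  rewrite <- H by lia. apply HN1; lia.
Qed.

Lemma cv_ev_pos a l : Un_cv a l -> 0 < l -> exists N, forall p, (N <= p)%nat -> 0 < a p.
Proof. intros Ha Hl. destruct (Ha l Hl) as [N HN]. exists N. intros p Hp.
  specialize (HN p Hp). unfold R_dist in HN. apply Rabs_def2 in HN. lra. Qed.

Lemma xlnx_cv a l : Un_cv a l -> Un_cv (fun p => xlnx (a p)) (xlnx l).
Proof.
  intros Ha. destruct (Rtotal_order l 0) as [Hl|[Hl|Hl]].
  - destruct (cv_ev_pos (fun p => - a p) (- l)) as [N HN].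
    { intros eps He. destruct (Ha eps He) as [N HN]. exists N. intros p Hp.
      unfold R_dist. replace (- a p - - l) with (- (a p - l)) by ring. rewrite Rabs_Ropp. apply HN; auto. }
    lra.
    apply (cv_eventually (fun _ => 0)) with N.
    intros p Hp. specialize (HN p Hp). unfold xlnx. destruct (Rle_dec (a p) 0); lra.
    unfold xlnx. destruct (Rle_dec l 0); [|lra]. intros eps He. exists 0%nat. intros. unfold R_dist. rewrite Rminus_0_r, Rabs_R0; auto.
  - subst. replace (xlnx 0) with 0 by (unfold xlnx; destruct (Rle_dec 0 0); lra).
    intros eps He. destruct (xlnx_small eps He) as [d [Hd Hd']].
    destruct (Ha d Hd) as [N HN]. exists N. intros p Hp. unfold R_dist. rewrite Rminus_0_r.
    apply Hd'. specialize (HN p Hp). unfold R_dist in HN. rewrite Rminus_0_r in HN. auto.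
  - destruct (cv_ev_pos a l Ha Hl) as [N HN].
    apply (cv_eventually (fun p => a p * ln (a p))) with N.
    intros p Hp. rewrite xlnx_pos; auto.
    rewrite xlnx_pos by auto. apply CV_mult; auto.
    apply continuity_seq; auto. apply derivable_continuous_pt.
    exists (/ l). apply derivable_pt_lim_ln; auto.
Qed.


Lemma sumR_cv n (F : nat -> nat -> R) (L : nat -> R) :
  (forall j, (j < n)%nat -> Un_cv (fun p => F p j) (L j)) ->
  Un_cv (fun p => sumR n (F p)) (sumR n L).
Proof.
  induction n; intros H; simpl.
  - intros eps He. exists 0%nat. intros. unfold R_dist. rewrite Rminus_0_r, Rabs_R0; auto.
  - apply CV_plus. apply IHn; intros; apply H; lia. apply H; lia.
Qed.

Fixpoint build (g : nat -> nat -> nat) (p : nat) : nat :=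
  match p with O => g O O | S p' => g (S (build g p')) (S p') end.

Lemma incr_ge (phi : nat -> nat) : (forall p, (phi p < phi (S p))%nat) -> forall p, (p <= phi p)%nat.
Proof. intros H p. induction p; [lia|]. specialize (H p). lia. Qed.

Lemma incr_mono (phi : nat -> nat) : (forall p, (phi p < phi (S p))%nat) -> forall p q, (p < q)%nat -> (phi p < phi q)%nat.
Proof. intros H p q Hpq. induction q; [lia|]. specialize (H q). destruct (Nat.eq_dec p q); subst; auto. specialize (IHq ltac:(lia)). lia. Qed.

Lemma cv_subseq u l (phi : nat -> nat) : Un_cv u l -> (forall p, (phi p < phi (S p))%nat) ->
  Un_cv (fun p => u (phi p)) l.
Proof. intros Hu Hp eps He. destruct (Hu eps He) as [N HN]. exists N. intros p Hpn.
  apply HN. pose proof (incr_ge phi Hp p). lia. Qed.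

Lemma inv_small eps : 0 < eps -> exists N, forall p, (N <= p)%nat -> / (INR p + 1) < eps.
Proof.
  intros He. destruct (@RinvN_cv eps He) as [N HN]. exists N. intros p Hp.
  specialize (HN N (le_n N)). unfold R_dist in HN. simpl in HN. rewrite Rminus_0_r in HN.
  rewrite Rabs_right in HN by (left; apply Rinv_0_lt_compat; pose proof (pos_INR N); lra).
  eapply Rle_lt_trans; [|exact HN]. apply Rinv_le_contravar. pose proof (pos_INR N); lra.
  apply le_INR in Hp. lra.
Qed.

Lemma subseq_1d (a : nat -> R) : (forall p, 0 <= a p <= 1) ->
  exists phi l, (forall p, (phi p < phi (S p))%nat) /\ Un_cv (fun p => a (phi p)) l.
Proof.
  intros Ha. destruct (Bolzano_Weierstrass a _ (compact_P3 0 1) Ha) as [l Hl].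
  assert (Hex : forall N q, exists p, (N <= p)%nat /\ Rabs (a p - l) < / (INR q + 1)).
  { intros N q. apply (Hl (fun z => Rabs (z - l) < / (INR q + 1)) N).
    exists (RinvN q). intros z Hz. exact Hz. }
  set (g := fun N q => proj1_sig (constructive_indefinite_description _ (Hex N q))).
  assert (Hg : forall N q, (N <= g N q)%nat /\ Rabs (a (g N q) - l) < / (INR q + 1)).
  { intros N q. unfold g. destruct (constructive_indefinite_description _ (Hex N q)); auto. }
  exists (build g), l. split.
  - intros p. simpl. destruct (Hg (S (build g p)) (S p)). lia.
  - intros eps He. destruct (inv_small eps He) as [N HN]. exists N. intros p Hp.
    unfold R_dist. eapply Rlt_trans; [|apply (HN p Hp)].
    destruct p; simpl; apply Hg.
Qed.

Lemma subseq_nd N (X : nat -> nat -> R) : (forall p i, (i < N)%nat -> 0 <= X p i <= 1) ->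
  exists phi L, (forall p, (phi p < phi (S p))%nat) /\
    forall i, (i < N)%nat -> Un_cv (fun p => X (phi p) i) (L i).
Proof.
  induction N; intros HX.
  - exists (fun p => p), (fun _ => 0). split; [intros; lia|intros; lia].
  - destruct IHN as [phi [L [Hphi HL]]]. intros; apply HX; lia.
    destruct (subseq_1d (fun p => X (phi p) N)) as [psi [l [Hpsi Hl]]].
    intros; apply HX; lia.
    exists (fun p => phi (psi p)), (fun i => if Nat.eqb i N then l else L i). split.
    + intros p. apply incr_mono; auto.
    + intros i Hi. destruct (Nat.eqb_spec i N). subst; auto.
      apply (cv_subseq (fun p => X (phi p) i)); auto. apply HL; lia.
Qed.

Lemma cv_const c : Un_cv (fun _ => c) c.
Proof. intros eps He. exists 0%nat. intros. unfold R_dist. rewrite Rminus_eq_0, Rabs_R0; auto. Qed.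

Lemma xlnx_ge t : -1 <= xlnx t.
Proof.
  unfold xlnx. destruct (Rle_dec t 0); [lra|].
  pose proof (ln_le_m1 (/ t) ltac:(apply Rinv_0_lt_compat; lra)). rewrite ln_Rinv in H by lra.
  assert (t * / t = 1) by (field; lra). nra.
Qed.

Lemma exists_max m y k u : (1 <= k)%nat -> exists c, is_max_topk m y k u c.
Proof.
  intros Hk. set (n := (m - 1)%nat).
  set (E := fun c => exists x, topk_simplex n k 1 x /\ c = topk_obj m y u x).
  assert (Hb : bound E).
  { exists (sumR n (fun j => Rabs (del y u j) + 1) + 1). intros c [x [Hx ->]].
    destruct (simplex_bounds n k x Hk Hx) as [_ Hxi]. rewrite obj_sum. fold n.
    pose proof (xlnx_ge (1 - ones_dot n x)).
    assert (sumR n (fun j => del y u j * x j - xlnx (x j)) <= sumR n (fun j => Rabs (del y u j) + 1)).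
    { apply sumR_le. intros i Hi. destruct (Hxi i Hi). pose proof (xlnx_ge (x i)).
      pose proof (Rle_abs (del y u i)). pose proof (Rabs_pos (del y u i)).
      assert (del y u i * x i <= Rabs (del y u i) * x i) by (apply Rmult_le_compat_r; lra). nra. }
    lra. }
  assert (Hne : exists c, E c).
  { exists (topk_obj m y u (fun _ => 0)), (fun _ => 0). split; auto.
    assert (H0 : ones_dot n (fun _ => 0) = 0) by (unfold ones_dot; rewrite sumR_const; ring).
    split; [rewrite H0; lra|]. intros; rewrite H0; lra. }
  destruct (completeness E Hb Hne) as [c [Hub Hlub]].
  assert (Happ : forall p, exists x, topk_simplex n k 1 x /\ c - / (INR p + 1) < topk_obj m y u x).
  { intros p. apply NNPP. intros Hn.
    assert (is_upper_bound E (c - / (INR p + 1))).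
    { intros t [x [Hx ->]]. apply Rnot_lt_le. intros Hlt. apply Hn. eauto. }
    apply Hlub in H. assert (0 < / (INR p + 1)) by (apply Rinv_0_lt_compat; pose proof (pos_INR p); lra). lra. }
  set (X := fun p => proj1_sig (constructive_indefinite_description _ (Happ p))).
  assert (HX : forall p, topk_simplex n k 1 (X p) /\ c - / (INR p + 1) < topk_obj m y u (X p)).
  { intros p. unfold X. destruct (constructive_indefinite_description _ (Happ p)); auto. }
  destruct (subseq_nd n X) as [phi [L [Hphi HL]]].
  { intros p i Hi. destruct (simplex_bounds n k (X p) Hk (proj1 (HX p))) as [_ H]. auto. }
  assert (Hs : Un_cv (fun p => ones_dot n (X (phi p))) (ones_dot n L)).
  { apply sumR_cv. auto. }
  assert (HLS : topk_simplex n k 1 L).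
  { split.
    - apply (@Rle_cv_lim (fun p => ones_dot n (X (phi p))) (fun _ => 1)); [|exact Hs|apply cv_const].
      intros p. exact (proj1 (proj1 (HX (phi p)))).
    - intros i Hi. split.
      + apply (@Rle_cv_lim (fun _ => 0) (fun p => X (phi p) i)); auto.
        intros p. apply (proj2 (proj1 (HX (phi p))) i Hi). apply cv_const.
      + apply (@Rle_cv_lim (fun p => X (phi p) i) (fun p => / INR k * ones_dot n (X (phi p)))); auto.
        intros p. apply (proj2 (proj1 (HX (phi p))) i Hi).
        apply CV_mult; auto. apply cv_const. }
  assert (HF : Un_cv (fun p => topk_obj m y u (X (phi p))) (topk_obj m y u L)).
  { eapply cv_eventually with (N := 0%nat). intros p _. symmetry. apply obj_sum.
    rewrite obj_sum. fold n. apply CV_minus.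
    - apply (sumR_cv n (fun p j => del y u j * X (phi p) j - xlnx (X (phi p) j))).
      intros j Hj. apply CV_minus. apply CV_mult. apply cv_const. auto. apply xlnx_cv; auto.
    - apply xlnx_cv. apply CV_minus. apply cv_const. exact Hs. }
  exists c. split.
  - exists L. split; auto. apply Rle_antisym.
    + apply Hub. exists L; auto.
    + apply (@Rle_cv_lim (fun p => c - / (INR p + 1)) (fun p => topk_obj m y u (X (phi p)))); auto.
      * intros p. destruct (HX (phi p)) as [_ H]. pose proof (incr_ge phi Hphi p).
        assert (/ (INR (phi p) + 1) <= / (INR p + 1)).
        { apply Rinv_le_contravar. pose proof (pos_INR p); lra. apply le_INR in H0. lra. }
        lra.
      * assert (Hc : Un_cv (fun p => c - / (INR p + 1)) (c - 0)).
        { apply CV_minus. apply cv_const. exact RinvN_cv. }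
        rewrite Rminus_0_r in Hc. exact Hc.
  - intros x Hx. apply Hub. exists x; auto.
Qed.

Theorem proposition8 (m y k : nat) (u : nat -> R) :
  (2 <= m)%nat -> (y < m)%nat -> (1 <= k)%nat -> (k <= m - 1)%nat ->
  u y = 0 ->
  (exists c, Lk_eq m y k u c /\ is_max_topk m y k u c) /\
  (k = 1%nat ->
     Lk_eq m y k u (ln (1 + sumR (m - 1) (fun j => exp (del y u j)))) /\
     ln (1 + sumR (m - 1) (fun j => exp (del y u j)))
       = ln (sumR m (fun j => exp (u j - u y)))).
Proof.
  intros Hm Hy Hk Hkm Hu. split.
  - destruct (exists_max m y k u Hk) as [c Hc]. exists c. split; auto. apply max_lub; auto.
  - intros ->. split.
    + apply max_lub; auto. split.
      * exists (xstar m y u). apply k1_attain.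
      * intros x Hx. apply (k1_upper m y u 1); auto.
    + f_equal. rewrite (sumR_split' m _ y Hy). rewrite Hu, Rminus_0_r, exp_0.
      rewrite Rplus_comm. f_equal. apply sumR_ext. intros i _. unfold del.
      destruct (Nat.ltb i y); rewrite Rminus_0_r; auto.
Qed.
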